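(* Let $K$ be a field of characteristic $0$ with algebraic closure $\bar K$ and $G_K=\operatorname{Gal}(\bar K/K)$, let $V$ be an algebraic variety defined over $K$, let $\mathcal{A}_V=\operatorname{Aut}(V)$ be the group of $\bar K$-automorphisms of $V$, and let $f:V\to V$ be a $\bar K$-endomorphism whose field of moduli is contained in $K$, i.e., for every $\sigma\in G_K$ there is $\varphi_\sigma\in\mathcal{A}_V$ with $f^\sigma=f^{\varphi_\sigma}$. Let $\mathcal{A}_f=\{\alpha\in\mathcal{A}_V: f^\alpha=f\}$, so that $\varphi_\sigma$ is well defined as an element of $\mathcal{A}_f\backslash\mathcal{A}_V$, giving a map $\varphi:G_K\to\mathcal{A}_f\backslash\mathcal{A}_V$. Let $\mathcal{N}_f$ be the normalizer of $\mathcal{A}_f$ in $\mathcal{A}_V$. Assume that $\mathcal{A}_f$ is finite and that $\mathcal{A}_f$ is defined over $K$ (i.e., $\alpha^\sigma\in\mathcal{A}_f$ for all $\alpha\in\mathcal{A}_f$, $\sigma\in G_K$). Then: (a) $\varphi_\sigma\in\mathcal{N}_f$ for every $\sigma\in G_K$ (for any choice of representative), and $\varphi:G_K\to\mathcal{A}_f\backslash\mathcal{N}_f$ is a $1$-cocycle with values in a group, i.e., $\varphi_{\sigma\tau}\equiv\varphi_\tau\varphi_\sigma^\tau\pmod{\mathcal{A}_f}$ for all $\sigma,\tau\in G_K$; hence it gives an element of $H^1(G_K,\mathcal{A}_f\backslash\mathcal{N}_f)$. (b) The following are equivalent: (1) there is $\gamma\in\mathcal{A}_V$ such that $f^\gamma$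 is defined over $K$ (i.e., $K$ is a field of definition for $f$); (2) there is $\delta\in\mathcal{A}_V$ such that $\varphi_\sigma=\mathcal{A}_f\delta^{-1}\delta^\sigma$ for all $\sigma\in G_K$ (i.e., $\varphi$ is a $G_K$-to-$\mathcal{A}_f\backslash\mathcal{N}_f$ coboundary).
   Context: For $\varphi\in\mathcal{A}_V$, $f^\varphi:=\varphi^{-1}\circ f\circ\varphi$. For $\sigma\in G_K$, $f^\sigma$ and $\varphi^\sigma$ denote the maps obtained by applying $\sigma$ to coefficients; Galois action is written exponentially as a right action, so $(x^\sigma)^\tau=x^{\sigma\tau}$, and $(f^\varphi)^\sigma=(f^\sigma)^{\varphi^\sigma}$. *)

(* Defs.v *)
(* Abstract (axiomatic) model of an algebraic variety V over a
   field K, seen through its monoid of Kbar-endomorphisms with the Galois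
   action on coefficients. *)
From HB Require Import structures.
From mathcomp Require Import all_boot all_order all_algebra.
Set Implicit Arguments. Unset Strict Implicit. Unset Printing Implicit Defensive.
Import GRing.Theory.
Local Open Scope ring_scope.

Definition is_subfield (L : fieldType) (K : {pred L}) : Prop :=
  [/\ 1 \in K, {in K &, forall x y, x - y \in K},
      {in K &, forall x y, x * y \in K} & {in K, forall x, x^-1 \in K}].

Definition algebraic_over (L : fieldType) (K : {pred L}) : Prop :=
  forall x : L, exists p : {poly L},
    [/\ p != 0, forall i, p`_i \in K & root p x].

Definition in_GalK (L : fieldType) (K : {pred L}) (s : L -> L) : Prop :=
  [/\ bijective s, {morph s : x y / x + y}, {morph s : x y / x * y},
      s 1 = 1 & {in K, forall x, s x = x}].

(* A variety V defined over K: its Kbar-endomorphisms form a monoid under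
   composition, and G_K acts on them by applying sigma to coefficients
   (exponential right action: (x^s)^t = x^(st), with st = t \o s on L). *)
Record var_over (L : fieldType) (K : {pred L}) := VarOver {
  endo :> Type;
  vcomp : endo -> endo -> endo;           (* vcomp a b = a \o b *)
  vid : endo;
  vact : endo -> (L -> L) -> endo;
  compA : forall a b c, vcomp a (vcomp b c) = vcomp (vcomp a b) c;
  comp1e : forall a, vcomp vid a = a;
  compe1 : forall a, vcomp a vid = a;
  gactM : forall s a b, in_GalK K s -> vact (vcomp a b) s = vcomp (vact a s) (vact b s);
  gact1 : forall s, in_GalK K s -> vact vid s = vid;
  gact_id : forall a, vact a id = a;
  gactA : forall s t a, in_GalK K s -> in_GalK K t -> vact (vact a s) t = vact a (t \o s)
}.

Arguments vcomp {L K v} : rename.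
Arguments vact {L K v} : rename.
Arguments vid {L K} v : rename.

Section VarDefs.
Variables (L : fieldType) (K : {pred L}) (V : var_over K).

Definition aut_inv_pair (a ai : V) : Prop := vcomp a ai = vid V /\ vcomp ai a = vid V.

Definition is_aut (a : V) : Prop := exists ai, aut_inv_pair a ai.

Definition conjE (f a g : V) : Prop :=
  exists ai, aut_inv_pair a ai /\ g = vcomp ai (vcomp f a).

Definition in_Af (f a : V) : Prop := is_aut a /\ conjE f a f.

Definition in_Nf (f p : V) : Prop :=
  exists pi, aut_inv_pair p pi /\
    forall a, in_Af f a <-> in_Af f (vcomp pi (vcomp a p)).

Definition finite_set (P : V -> Prop) : Prop :=
  exists n (g : 'I_n -> V), forall a, P a -> exists i, g i = a.

Definition defined_over (f : V) : Prop :=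
  forall s, in_GalK K s -> vact f s = f.

End VarDefs.

(* Main.v *)
Require Import Defs.
From HB Require Import structures.
From mathcomp Require Import all_boot all_order all_algebra.
Set Warnings "-all".
Set Implicit Arguments. Unset Strict Implicit.
From Stdlib Require Import FunctionalExtensionality.
Import GRing.Theory.
Local Open Scope ring_scope.
Definition vA := Defs.compA.

Lemma cR (L : fieldType) (K : {pred L}) (V : var_over K) (x p pi : V) :
  vcomp p pi = vid V -> vcomp (vcomp x p) pi = x.
Proof. by move=> H; rewrite -vA H compe1. Qed.

Lemma inv_uniq (L : fieldType) (K : {pred L}) (V : var_over K) (a ai y : V) :
  aut_inv_pair a ai -> vcomp a y = vid V -> y = ai.
Proof.
by move=> [H1 H2] H; rewrite -[y]comp1e -H2 -vA H compe1.
Qed.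

Lemma gal_comp (L : fieldType) (K : {pred L}) s t :
  in_GalK K s -> in_GalK K t -> in_GalK K (t \o s).
Proof.
move=> [bs ads ms s1 sK] [bt adt mt t1 tK]; split.
- exact: bij_comp.
- by move=> x y /=; rewrite ads adt.
- by move=> x y /=; rewrite ms mt.
- by rewrite /= s1 t1.
- by move=> x xK /=; rewrite sK ?tK.
Qed.

Lemma gal_inv (L : fieldType) (K : {pred L}) s :
  in_GalK K s -> exists s', [/\ in_GalK K s', s' \o s = id & s \o s' = id].
Proof.
move=> [[g c1 c2] ads ms s1 sK]; exists g; split.
- split.
  + by exists s.
  + by move=> x y; apply: (can_inj c1); rewrite c2 ads !c2.
  + by move=> x y; apply: (can_inj c1); rewrite c2 ms !c2.
  + by apply: (can_inj c1); rewrite s1 c2.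
  + by move=> x xK; apply: (can_inj c1); rewrite c2 sK.
- by apply: functional_extensionality => x /=; rewrite c1.
- by apply: functional_extensionality => x /=; rewrite c2.
Qed.

Lemma act_pair (L : fieldType) (K : {pred L}) (V : var_over K) s (a ai : V) :
  in_GalK K s -> aut_inv_pair a ai -> aut_inv_pair (vact a s) (vact ai s).
Proof.
by move=> Hs [H1 H2]; split; rewrite -gactM // ?H1 ?H2 gact1.
Qed.

Lemma act_Af (L : fieldType) (K : {pred L}) (V : var_over K) s (f b : V) :
  in_GalK K s -> in_Af f b -> in_Af (vact f s) (vact b s).
Proof.
move=> Hs [_ [bi [Hp E]]].
have Hp' := act_pair Hs Hp.
split; first by exists (vact bi s).
exists (vact bi s); split=> //.
by rewrite -!gactM // -E.
Qed.

Lemma conj_Af (L : fieldType) (K : {pred L}) (V : var_over K) (f p pi b : V) :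
  aut_inv_pair p pi -> in_Af (vcomp pi (vcomp f p)) b ->
  in_Af f (vcomp p (vcomp b pi)).
Proof.
move=> [P1 P2] [_ [bi [[B1 B2] E]]].
have Hq : aut_inv_pair (vcomp p (vcomp b pi)) (vcomp p (vcomp bi pi)).
  split; rewrite !vA.
  - by rewrite (cR _ P2) (cR _ B1) P1.
  - by rewrite (cR _ P2) (cR _ B2) P1.
split; first by exists (vcomp p (vcomp bi pi)).
exists (vcomp p (vcomp bi pi)); split=> //.
have -> : f = vcomp p (vcomp (vcomp pi (vcomp f p)) pi).
  by rewrite !vA P1 comp1e (cR _ P1).
rewrite {1}E !vA.
rewrite (cR _ P2).
rewrite (cR _ P2).
by [].
Qed.

Lemma pair_sym (L : fieldType) (K : {pred L}) (V : var_over K) (a ai : V) :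
  aut_inv_pair a ai -> aut_inv_pair ai a.
Proof. by case. Qed.

Lemma conj_Af2 (L : fieldType) (K : {pred L}) (V : var_over K) (f p pi c : V) :
  aut_inv_pair p pi -> in_Af f c ->
  in_Af (vcomp pi (vcomp f p)) (vcomp pi (vcomp c p)).
Proof.
move=> P Hc; apply: (conj_Af (pair_sym P)).
case: P => P1 P2.
by rewrite !vA P1 comp1e (cR _ P1).
Qed.

Lemma Af_act_iff (L : fieldType) (K : {pred L}) (V : var_over K) (f : V) s :
  (forall a s, in_Af f a -> in_GalK K s -> in_Af f (vact a s)) ->
  in_GalK K s -> forall b, in_Af (vact f s) b <-> in_Af f b.
Proof.
move=> H Hs b; have [s' [Hs' E1 E2]] := gal_inv Hs.
split=> Hb.
- have := act_Af Hs' Hb; rewrite gactA // E1 gact_id => Hb'.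
  by have := H _ _ Hb' Hs; rewrite gactA // E2 gact_id.
- have := act_Af Hs (H _ _ Hb Hs'); by rewrite gactA // E2 gact_id.
Qed.

Lemma same_conj (L : fieldType) (K : {pred L}) (V : var_over K) (f p pi q qi : V) :
  aut_inv_pair p pi -> aut_inv_pair q qi ->
  vcomp pi (vcomp f p) = vcomp qi (vcomp f q) ->
  exists a, in_Af f a /\ p = vcomp a q.
Proof.
move=> [P1 P2] [Q1 Q2] E.
have Pa : aut_inv_pair (vcomp p qi) (vcomp q pi).
  by split; rewrite !vA ?(cR _ Q2) ?(cR _ P2) ?P1 ?Q1.
exists (vcomp p qi); split; last by rewrite (cR _ Q2).
split; first by exists (vcomp q pi).
exists (vcomp q pi); split=> //.
have -> : vcomp (vcomp q pi) (vcomp f (vcomp p qi)) =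
          vcomp q (vcomp (vcomp pi (vcomp f p)) qi) by rewrite !vA.
by rewrite E !vA Q1 comp1e (cR _ Q1).
Qed.

Theorem proposition10 (L : closedFieldType) (K : {pred L}) (V : var_over K)
  (f : V) (phi : (L -> L) -> V) :
  [pchar L] =i pred0 ->
  is_subfield K ->
  algebraic_over K ->
  (* field of moduli contained in K, phi_s a choice of representative *)
  (forall s, in_GalK K s -> is_aut (phi s) /\ conjE f (phi s) (vact f s)) ->
  finite_set (in_Af f) ->
  (forall a s, in_Af f a -> in_GalK K s -> in_Af f (vact a s)) ->
  (* (a) *)
  ((forall s, in_GalK K s -> in_Nf f (phi s)) /\
   (forall s t, in_GalK K s -> in_GalK K t ->
      exists a, in_Af f a /\
        phi (t \o s) = vcomp a (vcomp (phi t) (vact (phi s) t)))) /\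
  (* (b) *)
  ((exists g h, is_aut g /\ conjE f g h /\ defined_over h) <->
   (exists d di, aut_inv_pair d di /\
      forall s, in_GalK K s ->
        exists a, in_Af f a /\ phi s = vcomp a (vcomp di (vact d s)))).
Proof.
move=> _ _ _ Hphi _ Hdef.
split; [split|split].
- move=> s Hs; have [_ [pi [P E]]] := Hphi s Hs.
  exists pi; split=> // a; split=> Ha.
  + apply/(Af_act_iff Hdef Hs); rewrite E; exact: conj_Af2.
  + have := proj2 (Af_act_iff Hdef Hs _) Ha; rewrite E => /(conj_Af P).
    case: P => P1 P2; by rewrite !vA P1 comp1e (cR _ P1).
- move=> s t Hs Ht.
  have Hts := gal_comp Hs Ht.
  have [_ [pts [Pts Ets]]] := Hphi _ Hts.
  have [_ [ps [Ps Es]]] := Hphi _ Hs.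
  have [_ [pt [Pt Et]]] := Hphi _ Ht.
  have Pst := act_pair Ht Ps.
  have Q : aut_inv_pair (vcomp (phi t) (vact (phi s) t)) (vcomp (vact ps t) pt).
    case: Pt Pst => [T1 T2] [S1 S2]; split; rewrite !vA.
    + by rewrite (cR _ S1) T1.
    + by rewrite (cR _ T2) S2.
  apply: (same_conj Pts Q).
  rewrite -Ets -(gactA _ Hs Ht) Es !gactM // Et !vA.
  by [].
- move=> [g [h [_ [[gi [[G1 G2] Eh]] Hh]]]].
  exists gi, g; split; first by [].
  move=> s Hs.
  have [_ [ps [Ps Es]]] := Hphi _ Hs.
  have [S1 S2] := act_pair Hs (conj (G1 : vcomp g gi = vid V) G2).
  have Q : aut_inv_pair (vcomp g (vact gi s)) (vcomp (vact g s) gi).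
    split; rewrite !vA.
    + by rewrite (cR _ S2) G1.
    + by rewrite (cR _ G2) S1.
  apply: (same_conj Ps Q).
  have Ef : f = vcomp g (vcomp h gi) by rewrite Eh !vA G1 comp1e (cR _ G1).
  rewrite -Es {1}Ef !gactM // (Hh s Hs) Ef !vA.
  by rewrite (cR _ G2) (cR _ G2).
- move=> [d [di [[D1 D2] Hd]]].
  exists di, (vcomp d (vcomp f di)); split; first by exists d.
  split; first by exists d.
  move=> s Hs.
  have [a [[_ [ai [[A1 A2] Ea]]] Eps]] := Hd s Hs.
  have [_ [ps [[P1 P2] Es]]] := Hphi _ Hs.
  have [S1 S2] := act_pair Hs (conj (D1 : vcomp d di = vid V) D2).
  rewrite !gactM // Es.
  have E1 : vcomp (phi s) (vact di s) = vcomp a di by rewrite Eps !vA (cR _ S1).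
  have E2 : vcomp (vact d s) ps = vcomp d ai.
    have -> : vact d s = vcomp (vcomp d ai) (phi s).
      by rewrite Eps !vA (cR _ A2) D1 comp1e.
    by rewrite (cR _ P1).
  have -> : vcomp (vact d s) (vcomp (vcomp ps (vcomp f (phi s))) (vact di s))
     = vcomp (vcomp (vact d s) ps) (vcomp f (vcomp (phi s) (vact di s))) by rewrite !vA.
  rewrite E1 E2 {2}Ea !vA.
  by [].
Qed.
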